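(* Let $d\ge4$ and $1\le p<d/2$ be integers. If $\mathbf{a}=(a,(a_{j00},a_{j01},a_{j10},a_{j11})_{j\in[p]})$ is a point on the boundary of $K$ with $a\notin\{0,\tfrac12\}$, then $\mathbf{a}$ is not a local maximum of $\varphi$ on $K$.
   Context: Let $\tau_j=\binom{d}{p}\binom{p}{j}\binom{d-p}{p-j}$ for $0\le j\le p$. Points of $\mathbb{R}^{4p+1}$ are written $\mathbf{z}=(z,(z_{j00},z_{j01},z_{j10},z_{j11})_{j\in[p]})$, with $z_{0\alpha\alpha}=z-\sum_{j\in[p]}z_{j\alpha\alpha}$ ($\alpha\in\{0,1\}$) and $z_{0\alpha\beta}=\frac12-z-\sum_{j\in[p]}z_{j\alpha\beta}$ ($\alpha\ne\beta$). $K$ is the set of $\mathbf{z}$ with $0\le z\le\frac12$ and $z_{j\alpha\beta}\ge0$ for all $0\le j\le p$, $\alpha,\beta\in\{0,1\}$. $A(\mathbf{z})=p+(d-4p)z+\sum_{j\in[p]}j(z_{j00}+z_{j11}-z_{j01}-z_{j10})$, $B=\frac d2-A$, and $\varphi(\mathbf{z})=A\log A+B\log B+\sum_{0\le j\le p,\ \alpha,\beta\in\{0,1\}}(z_{j\alpha\beta}\log\tau_j-z_{j\alpha\beta}\log z_{j\alpha\beta})$, with $0\log0=0$, a continuous function on $K$. *)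

(* Defs.v *)
(* R : realType, ln from mathcomp-analysis (ln x = 0 for x <= 0,
   so x * ln x realizes the convention 0 log 0 = 0). *)
From HB Require Import structures.
From mathcomp Require Import all_boot all_order all_algebra.
From mathcomp Require Import reals exp.
Set Implicit Arguments. Unset Strict Implicit. Unset Printing Implicit Defensive.
Import Order.TTheory GRing.Theory Num.Theory.
Local Open Scope ring_scope.

(* A point of R^{4p+1}: (z, w) where w i alpha beta = z_{(i+1) alpha beta},
   i : 'I_p encoding j = i+1 in [p] = {1,...,p}. *)
Definition pt (R : realType) (p : nat) := (R * ('I_p -> bool -> bool -> R))%type.

Section Defs.
Variables (R : realType) (d p : nat).

Definition tau (j : nat) : R := ('C(d, p) * 'C(p, j) * 'C(d - p, p - j))%N%:R.

Definition z0 (x : pt R p) (a b : bool) : R :=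
  if a == b then x.1 - \sum_(i < p) x.2 i a a
  else 1 / 2 - x.1 - \sum_(i < p) x.2 i a b.

Definition inK (x : pt R p) : Prop :=
  [/\ 0 <= x.1, x.1 <= 1 / 2,
      (forall (i : 'I_p) a b, 0 <= x.2 i a b) &
      (forall a b, 0 <= z0 x a b)].

Definition Afun (x : pt R p) : R :=
  p%:R + (d%:R - 4 * p%:R) * x.1
  + \sum_(i < p) (i.+1)%:R *
      (x.2 i false false + x.2 i true true - x.2 i false true - x.2 i true false).

Definition Bfun (x : pt R p) : R := d%:R / 2 - Afun x.

Definition xlnx (t : R) : R := t * ln t.

Definition phi (x : pt R p) : R :=
  xlnx (Afun x) + xlnx (Bfun x)
  + \sum_(a : bool) \sum_(b : bool)
      ((z0 x a b * ln (tau 0) - xlnx (z0 x a b))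
       + \sum_(i < p) (x.2 i a b * ln (tau i.+1) - xlnx (x.2 i a b))).

(* sup-norm ball (induces the Euclidean topology of R^{4p+1}) *)
Definition close (x y : pt R p) (e : R) : Prop :=
  `|x.1 - y.1| < e /\ forall (i : 'I_p) a b, `|x.2 i a b - y.2 i a b| < e.

Definition on_boundaryK (x : pt R p) : Prop :=
  forall e : R, 0 < e ->
    (exists y, close x y e /\ inK y) /\ (exists y, close x y e /\ ~ inK y).

Definition local_max_on_K (x : pt R p) : Prop :=
  inK x /\ exists e : R, 0 < e /\
    forall y, inK y -> close x y e -> phi y <= phi x.

End Defs.

(* Main.v *)
Require Import Defs.
From HB Require Import structures.
From mathcomp Require Import all_boot all_order all_algebra.
From mathcomp Require Import reals exp.
From mathcomp Require Import sequences.
From mathcomp Require Import ring lra.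
Import Order.TTheory GRing.Theory Num.Theory.
Local Open Scope ring_scope.

Section Aux.
Variable R : realType.

Lemma ln_le_sub1 (x : R) : 0 < x -> ln x <= x - 1.
Proof.
move=> x0; have := expR_ge1Dx (ln x); rewrite lnK ?qualifE //=; lra.
Qed.

Lemma xlnx_convex (u v : R) : 0 < u -> 0 < v ->
  (ln u + 1) * (v - u) <= xlnx v - xlnx u.
Proof.
move=> u0 v0.
have h := @ln_le_sub1 (u / v) (divr_gt0 u0 v0).
rewrite ln_div ?qualifE //= in h.
have h2 : v * (ln u - ln v) <= u - v.
  have := ler_wpM2l (ltW v0) h.
  have -> : v * (u / v - 1) = u - v by field; rewrite gt_eqF.
  done.
rewrite /xlnx. lra.
Qed.
End Aux.

Section Main.
Variables (R : realType) (d p : nat).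


Definition Z (v : pt R p) (a b : bool) (l : 'I_p.+1) : R :=
  if unlift ord0 l is Some i then v.2 i a b else z0 v a b.

Lemma ZS v a b i : Z v a b (lift ord0 i) = v.2 i a b.
Proof. by rewrite /Z liftK. Qed.

Lemma Z0 v a b : Z v a b ord0 = z0 v a b.
Proof. by rewrite /Z unlift_none. Qed.

Lemma Zsum v a b : \sum_(l < p.+1) Z v a b l = if a == b then v.1 else 1/2 - v.1.
Proof.
rewrite big_ord_recl Z0; under eq_bigr do rewrite ZS.
rewrite /z0; case: eqP => [<-|_]; ring.
Qed.

Lemma phiZ v : @phi R d p v = xlnx (@Afun R d p v) + xlnx (@Bfun R d p v)
  + \sum_(a : bool) \sum_(b : bool) \sum_(l < p.+1)
      (Z v a b l * ln (@tau R d p l) - xlnx (Z v a b l)).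
Proof.
rewrite /phi; congr (_ + _); apply: eq_bigr => a _; apply: eq_bigr => b _.
by rewrite big_ord_recl Z0; under [in RHS]eq_bigr do rewrite ZS.
Qed.

Lemma inK_Z v : @inK R p v -> forall a b l, 0 <= Z v a b l.
Proof.
case=> _ _ h1 h2 a b l; rewrite /Z; case: unlift => [i|] //.
Qed.



Lemma Abounds (v : pt R p) : @inK R p v ->
  (d%:R - 2 * p%:R) * v.1 <= @Afun R d p v /\
  (d%:R - 2 * p%:R) * (1/2 - v.1) <= @Bfun R d p v.
Proof.
case=> hz0 hz1 hw hz.

have hi (i : 'I_p) : (i.+1)%:R <= p%:R :> R by rewrite ler_nat ltn_ord.
have hi0 (i : 'I_p) : 0 <= (i.+1)%:R :> R by [].
have S1 : \sum_(i < p) (- (p%:R * (v.2 i false true + v.2 i true false))) <=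
   \sum_(i < p) (i.+1)%:R * (v.2 i false false + v.2 i true true - v.2 i false true - v.2 i true false).
  apply: ler_sum => i _.
  have := hw i false false; have := hw i true true; have := hw i false true;
  have := hw i true false; have := hi i.
  have := hi0 i. set P := (i.+1)%:R => hP hPp a1 a2 a3 a4.
  have := mulr_ge0 hP a1; have := mulr_ge0 hP a2; have := mulr_ge0 hP a3; have := mulr_ge0 hP a4.
  have hq : 0 <= p%:R - P by lra.
  have := mulr_ge0 hq a1; have := mulr_ge0 hq a2; have := mulr_ge0 hq a3; have := mulr_ge0 hq a4.
  nra.
have S2 : \sum_(i < p) (i.+1)%:R * (v.2 i false false + v.2 i true true - v.2 i false true - v.2 i true false)
   <= \sum_(i < p) (p%:R * (v.2 i false false + v.2 i true true)).
  apply: ler_sum => i _.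
  have := hw i false false; have := hw i true true; have := hw i false true;
  have := hw i true false; have := hi i.
  have := hi0 i. set P := (i.+1)%:R => hP hPp a1 a2 a3 a4.
  have := mulr_ge0 hP a1; have := mulr_ge0 hP a2; have := mulr_ge0 hP a3; have := mulr_ge0 hP a4.
  have hq : 0 <= p%:R - P by lra.
  have := mulr_ge0 hq a1; have := mulr_ge0 hq a2; have := mulr_ge0 hq a3; have := mulr_ge0 hq a4.
  nra.
rewrite sumrN -!mulr_sumr !big_split /= in S1 S2.
have := hz false true; have := hz true false; have := hz false false; have := hz true true.
rewrite /Defs.z0 /= => h11 h00 h10 h01.
rewrite /Bfun /Afun.
have hp : 0 <= p%:R :> R by [].
set s00 := \sum_(i < p) v.2 i false false in S2 h00 *.
set s11 := \sum_(i < p) v.2 i true true in S2 h11 *.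
set s01 := \sum_(i < p) v.2 i false true in S1 h01 *.
set s10 := \sum_(i < p) v.2 i true false in S1 h10 *.
set S := \sum_(i < p) _ in S1 S2 *.
have := mulr_ge0 hp h00; have := mulr_ge0 hp h11;
have := mulr_ge0 hp h01; have := mulr_ge0 hp h10.
clearbody s00 s11 s01 s10 S. move=> *; split; lra.
Qed.
Lemma sum_ind n (F : 'I_n -> R) j : \sum_(l < n) F l * (l == j)%:R = F j.
Proof.
rewrite (bigD1 j) //= eqxx mulr1 big1 ?addr0 // => l /negbTE ->; by rewrite mulr0.
Qed.

Definition D (j k l : 'I_p.+1) : R := (l == j)%:R - (l == k)%:R.

Lemma sumD j k : \sum_(l < p.+1) D j k l = 0.
Proof.
have h (m : 'I_p.+1) : \sum_(l < p.+1) ((l == m)%:R : R) = 1.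
  by rewrite (bigD1 m) //= eqxx big1 ?addr0 // => l /negbTE ->.
by rewrite /D sumrB !h subrr.
Qed.

Definition dd a b j k (i : 'I_p) (a' b' : bool) : R :=
  if (a' == a) && (b' == b) then D j k (lift ord0 i) else 0.

Definition pert (x : pt R p) a b j k (t : R) : pt R p :=
  (x.1, fun i a' b' => x.2 i a' b' + t * dd a b j k i a' b').

Lemma Zpert x a b j k t a' b' l :
  Z (pert x a b j k t) a' b' l =
  Z x a' b' l + t * (if (a' == a) && (b' == b) then D j k l else 0).
Proof.
case: (unliftP ord0 l) => [i ->|->].
  by rewrite !ZS /= /dd.
rewrite !Z0 /z0 /=.
have hs : \sum_(i < p) (x.2 i a' b' + t * dd a b j k i a' b') =
   \sum_(i < p) x.2 i a' b' - t * (if (a' == a) && (b' == b) then D j k ord0 else 0).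
  rewrite big_split /= -mulr_sumr /dd; case: ifP => _; last first.
    by rewrite big1_eq mulr0 subr0 addr0.
  have := sumD j k; rewrite big_ord_recl => h.
  have -> : \sum_(i < p) D j k (lift ord0 i) = - D j k ord0 by lra.
  ring.
case: eqP => [e|_]; [subst b'|]; rewrite hs; ring.
Qed.

Definition delta a b j k : R := \sum_(i < p) (i.+1)%:R *
  (dd a b j k i false false + dd a b j k i true true
   - dd a b j k i false true - dd a b j k i true false).

Lemma Apert x a b j k t :
  @Afun R d p (pert x a b j k t) = @Afun R d p x + t * delta a b j k.
Proof.
rewrite /Afun /delta /= mulr_sumr -!addrA; congr (_ + (_ + _)).
rewrite -big_split /=; apply: eq_bigr => i _; ring.
Qed.

Lemma Bpert x a b j k t :
  @Bfun R d p (pert x a b j k t) = @Bfun R d p x - t * delta a b j k.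
Proof. rewrite /Bfun Apert; ring. Qed.

Definition gl (l : 'I_p.+1) (z : R) := z * ln (@tau R d p l) - xlnx z.

Lemma sumpert x a b j k t :
  \sum_(a0 : bool) \sum_(b0 : bool) \sum_(l < p.+1) gl l (Z (pert x a b j k t) a0 b0 l)
  - \sum_(a0 : bool) \sum_(b0 : bool) \sum_(l < p.+1) gl l (Z x a0 b0 l)
  = \sum_(l < p.+1) (gl l (Z x a b l + t * D j k l) - gl l (Z x a b l)).
Proof.
  rewrite -sumrB.
  under eq_bigr => a0 _ do rewrite -sumrB.
  under eq_bigr => a0 _ do under eq_bigr => b0 _ do rewrite -sumrB.
  have z0s (a0 b0 : bool) : \sum_(l < p.+1) (gl l (Z x a0 b0 l + t * 0) - gl l (Z x a0 b0 l)) = 0.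
    by rewrite big1 // => l _; rewrite mulr0 addr0 subrr.
  under eq_bigr => a0 _ do under eq_bigr => b0 _ do under eq_bigr => l _ do rewrite Zpert.
  by rewrite !big_bool; case: a; case: b; rewrite /= ?z0s ?addr0 ?add0r.
Qed.

Lemma phipert x a b j k t :
  @phi R d p (pert x a b j k t) - @phi R d p x =
  (xlnx (@Afun R d p x + t * delta a b j k) - xlnx (@Afun R d p x))
  + (xlnx (@Bfun R d p x - t * delta a b j k) - xlnx (@Bfun R d p x))
  + \sum_(l < p.+1) (gl l (Z x a b l + t * D j k l) - gl l (Z x a b l)).
Proof.
rewrite !phiZ Apert Bpert -sumpert /gl.
lra.
Qed.
Lemma finlb (T : finType) (f : T -> R) : (forall q, 0 < f q) ->
  exists2 m : R, 0 < m & forall q, m <= f q.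
Proof.
move=> hf.
suff [m hm H] : exists2 m : R, 0 < m & forall q, q \in enum T -> m <= f q.
  by exists m => // q; apply: H; rewrite mem_enum.
elim: (enum T) => [|y s [m hm H]]; first by exists 1.
exists (Num.min (f y) m); first by rewrite lt_min hf hm.
move=> q; rewrite inE => /orP [/eqP ->|qs]; first by rewrite ge_min lexx.
by rewrite ge_min H ?orbT.
Qed.

Lemma exists_zero (x : pt R p) : @inK R p x -> 0 < x.1 -> x.1 < 1/2 ->
  @on_boundaryK R p x -> exists a b l, Z x a b l = 0.
Proof.
move=> hK x0 x1 hb.
case: (boolP [exists a, exists b, exists l, Z x a b l == 0]).
  by move=> /existsP [a /existsP [b /existsP [l /eqP h]]]; exists a, b, l.
rewrite negb_exists => /forallP H.
have hpos (q : bool * bool * 'I_p.+1) : 0 < Z x q.1.1 q.1.2 q.2.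
  have := H q.1.1; rewrite negb_exists => /forallP /(_ q.1.2).
  rewrite negb_exists => /forallP /(_ q.2) hne.
  by rewrite lt_neqAle eq_sym hne inK_Z.
have [m m0 hm] := @finlb _ _ hpos.
have hmZ a b l : m <= Z x a b l by apply: (hm (a, b, l)).
set mm := Num.min m (Num.min x.1 (1/2 - x.1)).
have mm0 : 0 < mm by rewrite !lt_min m0 x0 /=; lra.
have mm1 : mm <= m by rewrite ge_min lexx.
have mm2 : mm <= x.1 by rewrite !ge_min lexx orbT.
have mm3 : mm <= 1/2 - x.1 by rewrite !ge_min lexx !orbT.
have hp0 : 0 <= p%:R :> R by [].
set r := mm / (p%:R + 2).
have r0 : 0 < r by rewrite divr_gt0 //; lra.
have rE : r * p%:R + 2 * r = mm by rewrite /r; field; lra.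
have rp : 0 <= r * p%:R by rewrite mulr_ge0 // ltW.
have [_ [y [[c1 c2] ny]]] := hb r r0.
exfalso; apply: ny.
move: c1; rewrite ltr_norml => /andP [c1 c1'].
have c3 i a b : x.2 i a b - r <= y.2 i a b <= x.2 i a b + r.
  by have := c2 i a b; rewrite ltr_norml => /andP [e1 e2]; apply/andP; split; lra.
have hx2 i a b : mm <= x.2 i a b by rewrite -ZS; apply: le_trans (hmZ _ _ _).
have hsum a b : \sum_(i < p) y.2 i a b <= \sum_(i < p) x.2 i a b + r * p%:R.
  have -> : r * p%:R = \sum_(i < p) r by rewrite sumr_const card_ord mulr_natr.
  rewrite -big_split; apply: ler_sum => i _ /=.
  by have /andP [] := c3 i a b.
have hz a b : mm <= z0 x a b by rewrite -Z0; apply: le_trans (hmZ _ _ _).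
split; [lra| lra| |].
  move=> i a b; have /andP [] := c3 i a b; have := hx2 i a b; lra.
move=> a b; have := hz a b; have := hsum a b; rewrite /z0.
case: eqP => [e|_] h1 h2; [subst b|]; lra.
Qed.
Lemma absD j k l : k != j -> `|D j k l| <= 1.
Proof.
move=> kj; rewrite /D; case: (eqVneq l j) => [e|lj]; [subst l|].
  by rewrite eq_sym (negbTE kj) subr0 normr1.
by case: (l == k); rewrite /= ?(mulr0n, mulr1n, sub0r, subr0, subrr, normrN, normr1, normr0).
Qed.

Lemma main_sec (x : pt R p) :
  (4 <= d)%N -> (1 <= p)%N -> (p.*2 < d)%N ->
  @on_boundaryK R p x -> x.1 != 0 -> x.1 != 1 / 2 ->
  ~ @local_max_on_K R d p x.
Proof.
move=> hd hp1 hp2 hb hx0 hx1 [hK [e0 [e0p Hmax]]].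
have x0 : 0 < x.1 by rewrite lt_neqAle eq_sym hx0; case: hK.
have x1 : x.1 < 1/2 by rewrite lt_neqAle hx1; case: hK.
have [a [b [j hj]]] := @exists_zero x hK x0 x1 hb.
have [k hk] : exists k, 0 < Z x a b k.
  case: (boolP [exists k, 0 < Z x a b k]) => [/existsP [k hk]|]; first by exists k.
  rewrite negb_exists => /forallP H; exfalso.
  have : \sum_(l < p.+1) Z x a b l <= 0.
    by apply: sumr_le0 => l _; rewrite leNgt H.
  rewrite Zsum; case: eqP => _; lra.
have kj : k != j by apply/eqP => e; move: hk; rewrite e hj ltxx.
have hdp : 0 < d%:R - 2 * p%:R :> R.
  have : ((p.*2)%:R : R) < d%:R by rewrite ltr_nat.
  rewrite -mul2n natrM; lra.
have [Ab Bb] := @Abounds x hK.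
have A0 : 0 < @Afun R d p x.
  by apply: lt_le_trans Ab; rewrite mulr_gt0.
have B0 : 0 < @Bfun R d p x.
  by apply: lt_le_trans Bb; rewrite mulr_gt0 // subr_gt0.
set A := @Afun R d p x in Ab A0. set B := @Bfun R d p x in Bb B0.
set zk := Z x a b k in hk.
set dl := delta a b j k.
set C := dl * (ln A - ln B) + ln (@tau R d p j) - ln (@tau R d p k) + ln (zk / 2) + 1.
set t := Num.min (e0 / 2) (Num.min (zk / 2) (expR (C - 1))).
have t0 : 0 < t by rewrite !lt_min expR_gt0 !divr_gt0.
have te : t < e0 by apply: le_lt_trans (_ : e0 / 2 < e0); [rewrite ge_min lexx | lra].
have tz : t <= zk / 2 by rewrite !ge_min lexx orbT.
have tC : t <= expR (C - 1) by rewrite !ge_min lexx !orbT.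
set y := pert x a b j k t.
have hZy a' b' l : 0 <= Z y a' b' l.
  rewrite Zpert; case: ifP => [/andP [/eqP ea /eqP eb]|_]; last first.
    by rewrite mulr0 addr0 inK_Z.
  subst a' b'; rewrite /D; case: (eqVneq l j) => [e|lj]; [subst l|].
    rewrite eq_sym (negbTE kj) hj /=; lra.
  case: (eqVneq l k) => [e|lk]; [subst l|].
    rewrite -/zk /=; lra.
  have := @inK_Z x hK a b l; rewrite /=; lra.
have hKy : @inK R p y.
  case: hK => h1 h2 _ _; split => //.
    by move=> i a' b'; rewrite -ZS.
  by move=> a' b'; rewrite -Z0.
have hcl : @close R p x y e0.
  split; first by rewrite /= subrr normr0.
  move=> i a' b'; rewrite /= opprD addrA subrr add0r normrN normrM gtr0_norm //.
  have hd1 : `|dd a b j k i a' b'| <= 1.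
    rewrite /dd; case: ifP => _; [exact: absD | by rewrite normr0].
  have : t * `|dd a b j k i a' b'| <= t.
    rewrite -[X in _ <= X]mulr1; apply: ler_wpM2l => //; exact: ltW.
  lra.
have := Hmax y hKy hcl.
have Ay := (@Abounds y hKy).1; have By := (@Abounds y hKy).2.
rewrite /y Apert in Ay; rewrite /y Bpert in By.
move=> hle; suff : 0 < @phi R d p y - @phi R d p x by lra.
rewrite /y phipert -/A -/B -/dl.
rewrite (bigD1 j) //= (bigD1 k) //=.
rewrite big1; last first.
  move=> l /andP [lj lk]; rewrite /D (negbTE lj) (negbTE lk) subrr mulr0 addr0 subrr //.
rewrite /D eqxx (negbTE kj) eq_sym (negbTE kj) eqxx hj -/zk /gl.
have Ay0 : 0 < A + t * dl by apply: lt_le_trans Ay; rewrite mulr_gt0.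
have By0 : 0 < B - t * dl by apply: lt_le_trans By; rewrite mulr_gt0 // subr_gt0.
have h1 := @xlnx_convex R _ _ A0 Ay0.
have h2 := @xlnx_convex R _ _ B0 By0.
have zt : 0 < zk - t by lra.
have h3 := @xlnx_convex R _ _ zt hk.
have h4 : ln (zk / 2) <= ln (zk - t).
  by rewrite ler_ln ?qualifE /= ?divr_gt0 //; lra.
have h5 : ln t <= C - 1.
  by rewrite -[C - 1]expRK ler_ln ?qualifE /= ?expR_gt0.
have h4' := ler_wpM2l (ltW t0) h4.
have h5' := ler_wpM2l (ltW t0) h5.
rewrite /xlnx in h1 h2 h3 *; rewrite /C in h5'.
have -> : (0 + t * (true%:R - false%:R) : R) = t by rewrite /=; lra.
have -> : (zk + t * (false%:R - true%:R) : R) = zk - t by rewrite /=; lra.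
have h4'' := h4'. clear h4.
lra.
Qed.
End Main.

Theorem lemmaA4 (R : realType) (d p : nat) (x : pt R p) :
  (4 <= d)%N -> (1 <= p)%N -> (p.*2 < d)%N ->
  @on_boundaryK R p x -> x.1 != 0 -> x.1 != 1 / 2 ->
  ~ @local_max_on_K R d p x.
Proof. exact: (@main_sec R d p x). Qed.
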